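(* Let $\alpha_L,\alpha_R,\mu_L,\mu_R,\gamma_{RL},\gamma_{LR},\delta_L,\delta_R,\rho>0$. For every $(L_0,R_0,A_0)\in\mathcal T=\{(L,R,A)\in\mathbb{R}^3: L,R,A\ge0,\ L+R+A\le1\}$, the solution of \[ \begin{aligned} \dot L&=\alpha_L L C+\gamma_{RL} R C+\delta_L A L-\mu_L L,\\ \dot R&=\alpha_R R C+\gamma_{LR} L C+\delta_R A R-\mu_R R,\\ \dot A&=-\delta_L A L-\delta_R A R-\rho A, \end{aligned}\qquad C=1-L-R-A, \] with initial value $(L_0,R_0,A_0)$ remains in $\mathcal T$ for all $t\ge0$. *)

(* Defs.v *)
From Stdlib Require Import Reals.
From Coquelicot Require Import Coquelicot.
Open Scope R_scope.

Definition in_T (l r a : R) : Prop :=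
  0 <= l /\ 0 <= r /\ 0 <= a /\ l + r + a <= 1.

Definition Cfree (l r a : R) : R := 1 - l - r - a.

Definition fL (aL gRL dL muL : R) (l r a : R) : R :=
  aL * l * Cfree l r a + gRL * r * Cfree l r a + dL * a * l - muL * l.
Definition fR (aR gLR dR muR : R) (l r a : R) : R :=
  aR * r * Cfree l r a + gLR * l * Cfree l r a + dR * a * r - muR * r.
Definition fA (dL dR rho : R) (l r a : R) : R :=
  - dL * a * l - dR * a * r - rho * a.

(* Main.v *)
From Stdlib Require Import Reals Lra Lia Classical.
From Coquelicot Require Import Coquelicot.
Open Scope R_scope.

Require Import Defs.
Lemma cont_of_dpl f x l : derivable_pt_lim f x l ->
  forall e, 0 < e -> exists d, 0 < d /\ forall y, Rabs (y - x) < d -> Rabs (f y - f x) < e.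
Proof.
  intros H e He.
  destruct (H 1 Rlt_0_1) as [dl Hd].
  assert (Hl : 0 < Rabs l + 1) by (pose proof (Rabs_pos l); lra).
  exists (Rmin dl (e / (Rabs l + 1))). split.
  { apply Rmin_pos. apply cond_pos. apply Rdiv_lt_0_compat; lra. }
  intros y Hy.
  destruct (Req_dec y x) as [->|Hne].
  { replace (f x - f x) with 0 by ring. rewrite Rabs_R0. exact He. }
  set (h := y - x).
  assert (Hh : h <> 0) by (unfold h; lra).
  assert (Hhd : Rabs h < dl) by (eapply Rlt_le_trans; [exact Hy| apply Rmin_l]).
  assert (Hhe : Rabs h <= e / (Rabs l + 1)) by (left; eapply Rlt_le_trans; [exact Hy| apply Rmin_r]).
  specialize (Hd h Hh Hhd).
  replace (x + h) with y in Hd by (unfold h; ring).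
  set (q := (f y - f x) / h) in Hd.
  assert (Hq : Rabs q < Rabs l + 1).
  { replace q with ((q - l) + l) by ring.
    eapply Rle_lt_trans. apply Rabs_triang. lra. }
  replace (f y - f x) with (q * h) by (unfold q; field; exact Hh).
  rewrite Rabs_mult.
  assert (0 < Rabs h) by (apply Rabs_pos_lt; exact Hh).
  apply Rlt_le_trans with ((Rabs l + 1) * Rabs h).
  { apply Rmult_lt_compat_r; lra. }
  apply Rle_trans with ((Rabs l + 1) * (e / (Rabs l + 1))).
  { apply Rmult_le_compat_l; lra. }
  right; field; lra.
Qed.

Lemma dec_left f x l : derivable_pt_lim f x l -> 0 < l -> 0 < x ->
  exists tau, 0 <= tau < x /\ f tau < f x.
Proof.
  intros H Hl Hx.
  destruct (H l Hl) as [dl Hd].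
  set (h := - (Rmin dl x / 2)).
  assert (Hm : 0 < Rmin dl x) by (apply Rmin_pos; [apply cond_pos|lra]).
  assert (Hm1 := Rmin_l dl x). assert (Hm2 := Rmin_r dl x).
  assert (Hh : h <> 0) by (unfold h; lra).
  assert (Hhd : Rabs h < dl).
  { unfold h. rewrite Rabs_Ropp, Rabs_right by lra. lra. }
  specialize (Hd h Hh Hhd).
  set (q := (f (x + h) - f x) / h) in Hd.
  assert (Hq : 0 < q).
  { destruct (Rabs_def2 _ _ Hd). lra. }
  exists (x + h). split. { unfold h; lra. }
  assert (f (x + h) - f x = q * h) by (unfold q; field; exact Hh).
  assert (h < 0) by (unfold h; lra).
  assert (q * h < 0) by nra.
  lra.
Qed.

Lemma fin_nbhs (n : nat) (P : nat -> R -> Prop) :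
  (forall i, (i < n)%nat -> exists d, 0 < d /\ forall t, Rabs t < d -> P i t) ->
  exists d, 0 < d /\ forall t, Rabs t < d -> forall i, (i < n)%nat -> P i t.
Proof.
  induction n as [|n IH]; intros H.
  { exists 1. split; [lra|]. intros t _ i Hi. lia. }
  destruct IH as [d1 [Hd1 H1]].
  { intros i Hi. apply H. lia. }
  destruct (H n (Nat.lt_succ_diag_r n)) as [d2 [Hd2 H2]].
  exists (Rmin d1 d2). split. { apply Rmin_pos; lra. }
  intros t Ht i Hi.
  assert (Ht1 : Rabs t < d1) by (eapply Rlt_le_trans; [exact Ht|apply Rmin_l]).
  assert (Ht2 : Rabs t < d2) by (eapply Rlt_le_trans; [exact Ht|apply Rmin_r]).
  destruct (Nat.eq_dec i n) as [->|Hne]. { apply H2; exact Ht2. }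
  apply H1; [exact Ht1| lia].
Qed.

Lemma rc_of_filterlim f : filterlim f (at_right 0) (locally (f 0)) ->
  forall e, 0 < e -> exists d, 0 < d /\ forall t, 0 < t < d -> Rabs (f t - f 0) < e.
Proof.
  intros H e He.
  destruct (proj1 (filterlim_locally f (f 0)) H (mkposreal e He)) as [d Hd].
  exists d. split; [apply cond_pos|].
  intros t [Ht1 Ht2]. apply (Hd t); [|exact Ht1].
  change (Rabs (t - 0) < d). rewrite Rminus_0_r, Rabs_right; lra.
Qed.

Lemma bound_on f t1 : 0 < t1 ->
  (forall t, 0 < t -> continuity_pt f t) ->
  (forall e, 0 < e -> exists d, 0 < d /\ forall t, 0 < t < d -> Rabs (f t - f 0) < e) ->
  exists M, 0 <= M /\ forall t, 0 <= t <= t1 -> -M <= f t <= M.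
Proof.
  intros Ht1 Hc Hr.
  destruct (Hr 1 Rlt_0_1) as [d [Hd Hd1]].
  set (a := Rmin (d/2) t1).
  assert (Ha : 0 < a) by (apply Rmin_pos; lra).
  assert (Ha1 : a <= d/2) by apply Rmin_l.
  assert (Ha2 : a <= t1) by apply Rmin_r.
  assert (Hcc : forall c, a <= c <= t1 -> continuity_pt f c) by (intros c Hc'; apply Hc; lra).
  destruct (continuity_ab_maj f a t1 Ha2 Hcc) as [Mx [HM _]].
  destruct (continuity_ab_min f a t1 Ha2 Hcc) as [mx [Hm _]].
  exists (Rabs (f 0) + 1 + Rabs (f Mx) + Rabs (f mx)).
  pose proof (Rabs_pos (f 0)). pose proof (Rabs_pos (f Mx)). pose proof (Rabs_pos (f mx)).
  split; [lra|].
  intros t Ht.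
  pose proof (Rle_abs (f Mx)). pose proof (Rle_abs (- f mx)). rewrite Rabs_Ropp in *.
  pose proof (Rle_abs (f 0)). pose proof (Rle_abs (- f 0)). rewrite Rabs_Ropp in *.
  destruct (Rle_or_lt a t) as [Hat|Hat].
  { specialize (HM t (conj Hat (proj2 Ht))). specialize (Hm t (conj Hat (proj2 Ht))). lra. }
  destruct (Req_dec t 0) as [->|Hne]. { lra. }
  specialize (Hd1 t ltac:(lra)). destruct (Rabs_def2 _ _ Hd1). lra.
Qed.
Lemma barrier (n : nat) (u du : nat -> R -> R) (K0 t1 : R) :
  0 < t1 ->
  (forall i t, (i < n)%nat -> 0 < t -> derivable_pt_lim (u i) t (du i t)) ->
  (forall i e, (i < n)%nat -> 0 < e -> exists d, 0 < d /\ forall t, 0 < t < d -> Rabs (u i t - u i 0) < e) ->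
  (forall i, (i < n)%nat -> 0 <= u i 0) ->
  (forall i t eta, (i < n)%nat -> 0 < t <= t1 -> 0 < eta ->
     (forall j, (j < n)%nat -> - eta <= u j t) -> u i t = - eta -> - K0 * eta <= du i t) ->
  forall i, (i < n)%nat -> 0 <= u i t1.
Proof.
  intros Ht1 Hd Hr H0 Hb.
  set (K := Rabs K0 + 1).
  assert (HK : K0 < K) by (unfold K; pose proof (Rle_abs K0); lra).
  assert (HK0 : 0 < K) by (unfold K; pose proof (Rabs_pos K0); lra).
  assert (Main : forall eps, 0 < eps -> forall i, (i < n)%nat -> 0 < u i t1 + eps * exp (K * t1)).
  2:{ intros i Hi. destruct (Rle_or_lt 0 (u i t1)) as [?|Hneg]; [assumption|exfalso].
      pose proof (exp_pos (K * t1)).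
      set (eps := - u i t1 / (2 * exp (K * t1))).
      assert (Heps : 0 < eps) by (unfold eps; apply Rdiv_lt_0_compat; lra).
      specialize (Main eps Heps i Hi).
      assert (eps * exp (K * t1) = - u i t1 / 2) by (unfold eps; field; lra).
      lra. }
  intros eps Heps.
  set (phi := fun i t => u i t + eps * exp (K * t)).
  change (forall i, (i < n)%nat -> 0 < phi i t1).
  assert (Hexp : forall t, derivable_pt_lim (fun t => eps * exp (K * t)) t (eps * (K * exp (K * t)))).
  { intros t. apply is_derive_Reals. auto_derive; auto. ring. }
  assert (Hdphi : forall i t, (i < n)%nat -> 0 < t ->
            derivable_pt_lim (phi i) t (du i t + eps * (K * exp (K * t)))).
  { intros i t Hi Ht. exact (derivable_pt_lim_plus _ _ _ _ _ (Hd i t Hi Ht) (Hexp t)). }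
  assert (Hcont : forall i t, (i < n)%nat -> 0 < t -> forall e, 0 < e ->
            exists d, 0 < d /\ forall y, Rabs (y - t) < d -> Rabs (phi i y - phi i t) < e).
  { intros i t Hi Ht. exact (cont_of_dpl _ _ _ (Hdphi i t Hi Ht)). }
  assert (Hphi0 : forall i, (i < n)%nat -> eps <= phi i 0).
  { intros i Hi. unfold phi. rewrite Rmult_0_r, exp_0. pose proof (H0 i Hi). lra. }
  destruct (fin_nbhs n (fun i t => 0 < t -> 0 < phi i t)) as [d0 [Hd0 Hnear0]].
  { intros i Hi. destruct (Hr i (eps/2) Hi ltac:(lra)) as [d [Hd' Hd'']].
    exists d. split; [exact Hd'|]. intros t Ht Htp.
    rewrite Rabs_right in Ht by lra.
    specialize (Hd'' t (conj Htp Ht)). destruct (Rabs_def2 _ _ Hd'').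
    assert (1 <= exp (K * t)).
    { left. assert (HKt : 0 < K * t) by (apply Rmult_lt_0_compat; lra).
      pose proof (exp_ineq1 (K * t) ltac:(lra)). lra. }
    pose proof (H0 i Hi). unfold phi. nra. }
  set (E := fun x => 0 <= x <= t1 /\ forall tau, 0 <= tau <= x -> forall i, (i < n)%nat -> 0 < phi i tau).
  assert (E0 : E 0).
  { split; [lra|]. intros tau Htau i Hi. replace tau with 0 by lra. pose proof (Hphi0 i Hi). lra. }
  destruct (completeness E) as [s [Hub Hlub]].
  { exists t1. intros x Ex. apply Ex. }
  { exists 0. exact E0. }
  assert (Hs1 : s <= t1) by (apply Hlub; intros x Ex; apply Ex).
  assert (Before : forall tau, 0 <= tau < s -> forall i, (i < n)%nat -> 0 < phi i tau).
  { intros tau Htau i Hi. destruct (Rlt_or_le 0 (phi i tau)) as [?|Hle]; [assumption|exfalso].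
    assert (s <= tau).
    { apply Hlub. intros x Ex. destruct (Rle_lt_dec x tau) as [?|Hlt]; [assumption|exfalso].
      pose proof (proj2 Ex tau ltac:(lra) i Hi). lra. }
    lra. }
  assert (Hspos : 0 < s).
  { set (m := Rmin (d0/2) t1).
    assert (0 < m) by (apply Rmin_pos; lra).
    assert (m <= d0/2) by apply Rmin_l. assert (m <= t1) by apply Rmin_r.
    assert (Em : E m).
    { split; [lra|]. intros tau Htau i Hi.
      destruct (Req_dec tau 0) as [->|Hne]. { pose proof (Hphi0 i Hi). lra. }
      apply Hnear0; [rewrite Rabs_right; lra | exact Hi | lra]. }
    pose proof (Hub m Em). lra. }
  assert (AtS : forall i, (i < n)%nat -> 0 <= phi i s).
  { intros i Hi. destruct (Rle_or_lt 0 (phi i s)) as [?|Hneg]; [assumption|exfalso].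
    destruct (Hcont i s Hi Hspos (- phi i s) ltac:(lra)) as [d [Hd' Hd'']].
    set (tau := s - Rmin d s / 2).
    assert (0 < Rmin d s) by (apply Rmin_pos; lra).
    assert (Rmin d s <= d) by apply Rmin_l. assert (Rmin d s <= s) by apply Rmin_r.
    specialize (Hd'' tau ltac:(unfold tau; rewrite Rabs_left by lra; lra)).
    destruct (Rabs_def2 _ _ Hd'').
    pose proof (Before tau ltac:(unfold tau; lra) i Hi). lra. }
  destruct (classic (forall i, (i < n)%nat -> 0 < phi i s)) as [Hall|Hnall].
  - destruct (Req_dec s t1) as [<-|Hne]; [exact Hall|exfalso].
    destruct (fin_nbhs n (fun i h => 0 < phi i (s + h))) as [d [Hd' Hd'']].
    { intros i Hi. destruct (Hcont i s Hi Hspos (phi i s) (Hall i Hi)) as [d [Hd' Hd'']].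
      exists d. split; [exact Hd'|]. intros h Hh.
      specialize (Hd'' (s + h) ltac:(replace (s + h - s) with h by ring; exact Hh)).
      destruct (Rabs_def2 _ _ Hd''). lra. }
    set (x := Rmin (s + d/2) t1).
    assert (x <= s + d/2) by apply Rmin_l. assert (x <= t1) by apply Rmin_r.
    assert (s < x) by (unfold x; apply Rmin_glb_lt; lra).
    assert (Ex : E x).
    { split; [lra|]. intros tau Htau i Hi.
      destruct (Rlt_or_le tau s) as [Hlt|Hge]. { apply Before; [split; lra | exact Hi]. }
      replace tau with (s + (tau - s)) by ring.
      apply Hd''; [rewrite Rabs_right; lra| exact Hi]. }
    pose proof (Hub x Ex). lra.
  - apply not_all_ex_not in Hnall. destruct Hnall as [i Hi].
    apply imply_to_and in Hi. destruct Hi as [Hi Hnot].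
    assert (Hz : phi i s = 0) by (pose proof (AtS i Hi); lra).
    set (eta := eps * exp (K * s)).
    assert (Heta : 0 < eta) by (unfold eta; pose proof (exp_pos (K * s)); nra).
    assert (Hbd := Hb i s eta Hi (conj Hspos Hs1) Heta).
    assert (Hui : u i s = - eta) by (unfold phi in Hz; unfold eta; lra).
    assert (Huj : forall j, (j < n)%nat -> - eta <= u j s).
    { intros j Hj. pose proof (AtS j Hj). unfold phi in H. unfold eta; lra. }
    specialize (Hbd Huj Hui).
    assert (Hpos : 0 < du i s + eps * (K * exp (K * s))).
    { replace (eps * (K * exp (K * s))) with (K * eta) by (unfold eta; ring). nra. }
    destruct (dec_left _ _ _ (Hdphi i s Hi Hspos) Hpos Hspos) as [tau [Htau Hlt]].
    pose proof (Before tau Htau i Hi). lra.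
Qed.

Lemma prod_lb x y eta B : 0 < eta -> -eta <= x -> -eta <= y -> -B <= x <= B -> -B <= y <= B ->
  - (eta * B) <= x * y.
Proof.
  intros He Hx Hy [Hx1 Hx2] [Hy1 Hy2].
  destruct (Rle_or_lt 0 x); destruct (Rle_or_lt 0 y); nra.
Qed.

Ltac posit := repeat (apply Rmult_le_pos); lra.

Theorem proposition6p1
  (aL aR muL muR gRL gLR dL dR rho : R)
  (haL : 0 < aL) (haR : 0 < aR) (hmuL : 0 < muL) (hmuR : 0 < muR)
  (hgRL : 0 < gRL) (hgLR : 0 < gLR) (hdL : 0 < dL) (hdR : 0 < dR)
  (hrho : 0 < rho)
  (L Rf A : R -> R)
  (hL : forall t, 0 < t -> is_derive L t (fL aL gRL dL muL (L t) (Rf t) (A t)))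
  (hR : forall t, 0 < t -> is_derive Rf t (fR aR gLR dR muR (L t) (Rf t) (A t)))
  (hA : forall t, 0 < t -> is_derive A t (fA dL dR rho (L t) (Rf t) (A t)))
  (cL : filterlim L (at_right 0) (locally (L 0)))
  (cR : filterlim Rf (at_right 0) (locally (Rf 0)))
  (cA : filterlim A (at_right 0) (locally (A 0)))
  (h0 : in_T (L 0) (Rf 0) (A 0)) :
  forall t, 0 <= t -> in_T (L t) (Rf t) (A t).
Proof.
  intros t1 Ht1.
  destruct (Req_dec t1 0) as [->|Hne]; [exact h0|].
  assert (Ht1p : 0 < t1) by lra. clear Ht1 Hne.
  pose proof (fun t Ht => proj1 (is_derive_Reals _ _ _) (hL t Ht)) as dL'.
  pose proof (fun t Ht => proj1 (is_derive_Reals _ _ _) (hR t Ht)) as dR'.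
  pose proof (fun t Ht => proj1 (is_derive_Reals _ _ _) (hA t Ht)) as dA'.
  pose proof (rc_of_filterlim _ cL) as rL.
  pose proof (rc_of_filterlim _ cR) as rR.
  pose proof (rc_of_filterlim _ cA) as rA.
  destruct (bound_on L t1 Ht1p (fun t Ht => derivable_continuous_pt _ _ (exist _ _ (dL' t Ht))) rL) as [ML [HML BL]].
  destruct (bound_on Rf t1 Ht1p (fun t Ht => derivable_continuous_pt _ _ (exist _ _ (dR' t Ht))) rR) as [MR [HMR BR]].
  destruct (bound_on A t1 Ht1p (fun t Ht => derivable_continuous_pt _ _ (exist _ _ (dA' t Ht))) rA) as [MA [HMA BA]].
  set (B := 1 + 3 * (ML + MR + MA)).
  set (S := aL + aR + gRL + gLR + dL + dR + muL + muR + rho).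
  set (K0 := S * (B + 1)).
  set (u := fun (i : nat) => match i with
              | 0%nat => L | 1%nat => Rf | 2%nat => A
              | _ => fun t => 1 - L t - Rf t - A t end).
  set (du := fun (i : nat) (t : R) => match i with
              | 0%nat => fL aL gRL dL muL (L t) (Rf t) (A t)
              | 1%nat => fR aR gLR dR muR (L t) (Rf t) (A t)
              | 2%nat => fA dL dR rho (L t) (Rf t) (A t)
              | _ => 0 - fL aL gRL dL muL (L t) (Rf t) (A t)
                       - fR aR gLR dR muR (L t) (Rf t) (A t)
                       - fA dL dR rho (L t) (Rf t) (A t) end).
  assert (Hbar := barrier 4 u du K0 t1 Ht1p).
  destruct h0 as [h0L [h0R [h0A h0S]]].
  assert (G : forall i, (i < 4)%nat -> 0 <= u i t1).
  { apply Hbar.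
    - intros i t Hi Ht. destruct i as [|[|[|i]]]; simpl.
      + exact (dL' t Ht).
      + exact (dR' t Ht).
      + exact (dA' t Ht).
      + exact (derivable_pt_lim_minus _ _ _ _ _
                 (derivable_pt_lim_minus _ _ _ _ _
                   (derivable_pt_lim_minus _ _ _ _ _ (derivable_pt_lim_const 1 t) (dL' t Ht))
                   (dR' t Ht)) (dA' t Ht)).
    - intros i e Hi He. destruct i as [|[|[|i]]]; simpl.
      + exact (rL e He).
      + exact (rR e He).
      + exact (rA e He).
      + destruct (rL (e/3) ltac:(lra)) as [d1 [Hd1 H1]].
        destruct (rR (e/3) ltac:(lra)) as [d2 [Hd2 H2]].
        destruct (rA (e/3) ltac:(lra)) as [d3 [Hd3 H3]].
        exists (Rmin d1 (Rmin d2 d3)). split. { repeat apply Rmin_pos; lra. }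
        intros t Ht.
        pose proof (Rmin_l d1 (Rmin d2 d3)). pose proof (Rmin_r d1 (Rmin d2 d3)).
        pose proof (Rmin_l d2 d3). pose proof (Rmin_r d2 d3).
        specialize (H1 t ltac:(split; lra)). specialize (H2 t ltac:(split; lra)).
        specialize (H3 t ltac:(split; lra)).
        destruct (Rabs_def2 _ _ H1). destruct (Rabs_def2 _ _ H2). destruct (Rabs_def2 _ _ H3).
        apply Rabs_def1; lra.
    - intros i Hi. destruct i as [|[|[|i]]]; simpl; lra.
    - intros i t eta Hi Ht Heta Hall Hui.
      assert (Ht' : 0 <= t <= t1) by lra.
      destruct (BL t Ht') as [bL1 bL2]. destruct (BR t Ht') as [bR1 bR2].
      destruct (BA t Ht') as [bA1 bA2].
      pose proof (Hall 0%nat ltac:(lia)) as lL. pose proof (Hall 1%nat ltac:(lia)) as lR.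
      pose proof (Hall 2%nat ltac:(lia)) as lA. pose proof (Hall 3%nat ltac:(lia)) as lC.
      simpl in lL, lR, lA, lC.
      assert (HC : Cfree (L t) (Rf t) (A t) = 1 - L t - Rf t - A t) by reflexivity.
      assert (HB0 : 0 <= B) by (unfold B; lra).
      assert (HK : - K0 * eta = - (S * eta * B + S * eta)) by (unfold K0; ring).
      assert (HSB : 0 <= S * eta * B) by (unfold S; posit).
      assert (HSe : 0 <= S * eta) by (unfold S; posit).
      rewrite HK.
      destruct i as [|[|[|i]]]; simpl in Hui |- *; unfold fL, fR, fA;
        set (c := Cfree (L t) (Rf t) (A t)) in *;
        set (l := L t) in *; set (r := Rf t) in *; set (a := A t) in *;
        assert (cB : -B <= c <= B) by (unfold B; lra);
        assert (lB : -B <= l <= B) by (unfold B; lra);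
        assert (rB : -B <= r <= B) by (unfold B; lra);
        assert (aB : -B <= a <= B) by (unfold B; lra).
      + rewrite Hui.
        pose proof (prod_lb r c eta B Heta lR ltac:(lra) rB cB).
        assert (0 <= aL * eta * (B - c)) by posit.
        assert (0 <= dL * eta * (B - a)) by posit.
        assert (0 <= (S - aL - dL - gRL) * eta * B) by (unfold S; posit).
        assert (0 <= muL * eta) by posit.
        assert (0 <= gRL * (r * c + eta * B)) by posit.
        lra.
      + rewrite Hui.
        pose proof (prod_lb l c eta B Heta lL ltac:(lra) lB cB).
        assert (0 <= aR * eta * (B - c)) by posit.
        assert (0 <= dR * eta * (B - a)) by posit.
        assert (0 <= (S - aR - dR - gLR) * eta * B) by (unfold S; posit).
        assert (0 <= muR * eta) by posit.
        assert (0 <= gLR * (l * c + eta * B)) by posit.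
        lra.
      + rewrite Hui.
        assert (0 <= dL * eta * (l + B)) by posit.
        assert (0 <= dR * eta * (r + B)) by posit.
        assert (0 <= (S - dL - dR) * eta * B) by (unfold S; posit).
        assert (0 <= rho * eta) by posit.
        lra.
      + assert (Hc : c = - eta) by (rewrite HC; exact Hui).
        rewrite Hc.
        assert (0 <= aL * eta * (l + B)) by posit.
        assert (0 <= aR * eta * (r + B)) by posit.
        assert (0 <= gRL * eta * (r + B)) by posit.
        assert (0 <= gLR * eta * (l + B)) by posit.
        assert (0 <= (S - aL - aR - gRL - gLR) * eta * B) by (unfold S; posit).
        assert (0 <= muL * (l + eta)) by posit.
        assert (0 <= muR * (r + eta)) by posit.
        assert (0 <= rho * (a + eta)) by posit.
        assert (0 <= (S - muL - muR - rho) * eta) by (unfold S; posit).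
        lra. }
  destruct (Rle_or_lt 0 1) as [_|]; [|lra].
  pose proof (G 0%nat ltac:(lia)). pose proof (G 1%nat ltac:(lia)).
  pose proof (G 2%nat ltac:(lia)). pose proof (G 3%nat ltac:(lia)).
  simpl in *. unfold in_T. lra.
Qed.
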